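(* Let $n\ge 1$ and let $\vec v=(v_1,\dots,v_n)\in\mathbb N_b^n$. For $1\le j\le n$ let $q_j=\#\{i:\ v_i=j\}$. Then there is exactly one complete expression in the letters $x_1,\dots,x_{n+1}$ in which, for every $j$, exactly $q_j$ left parentheses stand immediately to the left of $x_j$ (and no left parenthesis stands immediately to the left of $x_{n+1}$). Sending $\vec v$ to the tree of $Y_n$ corresponding to this complete expression defines a map $\mathrm{Tree}:\mathbb N_b^n\to Y_n$, and this map is surjective.
   Context: $\mathbb N_b^n=\{(v_1,\dots,v_n)\in\mathbb N^n:\ 1\le v_i\le i \text{ for all } i\}$. For $n\ge0$, $Y_n$ denotes the set of planar rooted binary trees with $n$ internal (trivalent) vertices, hence $n+1$ leaves, up to isotopy; $Y_0$ consists of the single trivial tree $|$. For $\tau_1\in Y_p,\tau_2\in Y_q$ the grafting $\tau_1\vee\tau_2\in Y_{p+q+1}$ is the tree with a new root vertex whose left subtree is $\tau_1$ and whose right subtree is $\tau_2$. A complete expression in the letters $x_1,\dots,x_{n+1}$ is a full binary parenthesization of the word $x_1x_2\cdots x_{n+1}$ in which every product of two factors, including the outermost one, is enclosed in a pair of parentheses (so there are $n$ pairs). Trees of $Y_n$ correspond bijectively to complete expressions: $|\mapsto x_1$, and $\tau_1\vee\tau_2\mapsto(E_1E_2)$ where $E_1,E_2$ are the complete expressions of $\tau_1,\tau_2$, with letters relabelled consecutively from left to right. *)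

(* Defs.v *)
From mathcomp Require Import all_boot.
Set Implicit Arguments. Unset Strict Implicit. Unset Printing Implicit Defensive.

(* Planar rooted binary trees: Leaf = the trivial tree |, Node l r = l \vee r. *)
Inductive btree : Type := Leaf | Node of btree & btree.

Fixpoint internal (t : btree) : nat :=
  match t with Leaf => 0 | Node l r => (internal l + internal r).+1 end.

Fixpoint leaves (t : btree) : nat :=
  match t with Leaf => 1 | Node l r => leaves l + leaves r end.

Inductive tok : Type := LP | RP | Let of nat.

Fixpoint cexpr (k : nat) (t : btree) : seq tok :=
  match t with
  | Leaf => [:: Let k]
  | Node l r => LP :: cexpr k l ++ cexpr (k + leaves l) r ++ [:: RP]
  end.

(* Number of left parentheses standing immediately to the left of the
   (first occurrence of the) letter x_j in the word w. *)
Fixpoint lp_before_aux (j acc : nat) (w : seq tok) : nat :=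
  match w with
  | [::] => 0
  | LP :: w' => lp_before_aux j acc.+1 w'
  | RP :: w' => lp_before_aux j 0 w'
  | Let i :: w' => if i == j then acc else lp_before_aux j 0 w'
  end.

Definition lp_before (j : nat) (w : seq tok) : nat := lp_before_aux j 0 w.

(* N_b^n, with v_i stored at index i-1 : 'I_n *)
Definition in_Nb (n : nat) (v : 'I_n -> nat) : Prop :=
  forall i : 'I_n, 1 <= v i <= i.+1.

Definition qcount (n : nat) (v : 'I_n -> nat) (j : nat) : nat :=
  #|[pred i : 'I_n | v i == j]|.

Definition tree_condition (n : nat) (v : 'I_n -> nat) (t : btree) : Prop :=
  internal t = n /\
  (forall j, 1 <= j <= n -> lp_before j (cexpr 1 t) = qcount v j) /\
  lp_before n.+1 (cexpr 1 t) = 0.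

(* Main.v *)
Require Import Defs.
From mathcomp Require Import all_boot zify.

Fixpoint lpsa (a : nat) (t : btree) : seq nat :=
  match t with Leaf => [:: a] | Node l r => lpsa a.+1 l ++ lpsa 0 r end.

Lemma size_lpsa a t : size (lpsa a t) = leaves t.
Proof. by elim: t a => [|l IHl r IHr] a //=; rewrite size_cat IHl IHr. Qed.

Lemma leaves_internal t : leaves t = (internal t).+1.
Proof. elim: t => [|l IHl r IHr] //=; rewrite IHl IHr; lia. Qed.

Lemma lp_aux j acc k t w :
  lp_before_aux j acc (cexpr k t ++ w) =
  if (k <= j) && (j < k + leaves t) then nth 0 (lpsa acc t) (j - k)
  else lp_before_aux j 0 w.
Proof.
elim: t j acc k w => [|l IHl r IHr] j acc k w /=.
  case: eqP => [->|hne]; first by rewrite leqnn addn1 ltnSn subnn.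
  case: ifP => // /andP [h1 h2]; exfalso; apply: hne; lia.
rewrite -catA IHl -catA IHr /= nth_cat size_lpsa.
case: ifP => [/andP [h1 h2]|hl].
  rewrite ifT; last lia. by rewrite ifT; last lia.
case: ifP => [/andP [h1 h2]|hr].
  rewrite ifT; last lia. rewrite ifF; last lia.
  by congr nth; lia.
rewrite ifF //. apply/negbTE/negP => /andP [h1 h2].
move/negbT: hl; move/negbT: hr. lia.
Qed.

Lemma lp_cexpr j t : lp_before j (cexpr 1 t) =
  if (1 <= j) && (j < 1 + leaves t) then nth 0 (lpsa 0 t) (j - 1) else 0.
Proof.
rewrite /lp_before -[cexpr 1 t]cats0 lp_aux. by case: ifP.
Qed.

Definition good a (s : seq nat) :=
  [/\ 0 < size s, sumn s + 1 = size s + a &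
      forall m, 0 < m < size s -> m + a <= sumn (take m s)].

Lemma sumn_take_cat m (s1 s2 : seq nat) :
  sumn (take m (s1 ++ s2)) =
  if m < size s1 then sumn (take m s1) else sumn s1 + sumn (take (m - size s1) s2).
Proof. rewrite take_cat; case: ifP => // _; by rewrite sumn_cat. Qed.

Lemma lpsa_good a t : good a (lpsa a t).
Proof.
elim: t a => [|l IHl r IHr] a /=; first by split => //= [|m]; lia.
have [g1 g2 g3] := IHl a.+1; have [h1 h2 h3] := IHr 0.
split; first by rewrite size_cat; lia.
  by rewrite sumn_cat size_cat; lia.
move=> m; rewrite size_cat => hm; rewrite sumn_take_cat.
case: ifP => hl; first by have := g3 m; lia.
case: (posnP (m - size (lpsa a.+1 l))) => h0.
  rewrite h0 take0 /=; lia.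
have := h3 (m - size (lpsa a.+1 l)); lia.
Qed.

Lemma lpsa_inj a t t' : lpsa a t = lpsa a t' -> t = t'.
Proof.
elim: t a t' => [|l IHl r IHr] a [|l' r'] //=.
- move=> /(f_equal size); rewrite size_cat /= !size_lpsa !leaves_internal; lia.
- move=> /(f_equal size); rewrite size_cat /= !size_lpsa !leaves_internal; lia.
move=> E.
have hs : size (lpsa a.+1 l) = size (lpsa a.+1 l').
  have [g1 g2 g3] := lpsa_good a.+1 l; have [h1 h2 h3] := lpsa_good a.+1 l'.
  have [u1 u2 u3] := lpsa_good 0 r; have [w1 w2 w3] := lpsa_good 0 r'.
  case: (ltngtP (size (lpsa a.+1 l)) (size (lpsa a.+1 l'))) => // hlt.
    have := f_equal (fun s => sumn (take (size (lpsa a.+1 l)) s)) E => /=.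
    rewrite !sumn_take_cat ltnn hlt subnn take0 /= => e.
    have := h3 (size (lpsa a.+1 l)); lia.
  have := f_equal (fun s => sumn (take (size (lpsa a.+1 l')) s)) E => /=.
  rewrite !sumn_take_cat ltnn hlt subnn take0 /= => e.
  have := g3 (size (lpsa a.+1 l')); lia.
move/eqP: E; rewrite eqseq_cat // => /andP [/eqP E1 /eqP E2].
by rewrite (IHl _ _ E1) (IHr _ _ E2).
Qed.

Lemma sumn_take_le m (s : seq nat) : sumn (take m s) <= sumn s.
Proof. by rewrite -{2}(cat_take_drop m s) sumn_cat leq_addr. Qed.

Lemma good_lpsa_aux L : forall a s, size s <= L -> good a s -> exists t, lpsa a t = s.
Proof.
elim: L => [|L IH] a s hL [g1 g2 g3]; first lia.
case: s hL g1 g2 g3 => [|c [|d s']] //= hL _ g2 g3.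
  by exists Leaf; congr [:: _]; lia.
set s := c :: d :: s' in g2 g3 *.
have hsz : size s = (size s').+2 by [].
have hsum : sumn s = c + (d + sumn s') by [].
pose P := fun m => (0 < m) && (sumn (take m s) <= m + a).
have exP : exists m, P m.
  exists (size s).-1; apply/andP; split; first by rewrite hsz.
  have := sumn_take_le (size s).-1 s.
  rewrite hsz /= in g2 *; lia.
case: (ex_minnP exP) => m /andP [m0 hm] hmin.
have mlt : m < size s.
  have hP : P (size s').+1.
    apply/andP; split => //.
    have := sumn_take_le (size s').+1 s. lia.
  have := hmin _ hP; rewrite hsz; lia.
have e1 : sumn (take m s) = m + a by have := g3 m; lia.
have [l hl] : exists l, lpsa a.+1 l = take m s.
  apply: (IH a.+1); first by rewrite size_take mlt; lia.
  split; first by rewrite size_take mlt.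
    by rewrite size_take mlt; lia.
  move=> m'; rewrite size_take mlt => hm'.
  rewrite -take_min (minn_idPl (ltnW (proj2 (andP hm')))).
  have : ~~ P m'.
    apply/negP => Pm'; have := hmin m' Pm'; lia.
  rewrite /P negb_and; case/orP; lia.
have [r hr] : exists r, lpsa 0 r = drop m s.
  apply: (IH 0); first by rewrite size_drop; lia.
  have es : sumn s = sumn (take m s) + sumn (drop m s).
    by rewrite -{1}(cat_take_drop m s) sumn_cat.
  split; rewrite size_drop; first lia.
    lia.
  move=> m'' hm''.
  have := g3 (m + m''); rewrite takeD sumn_cat; lia.
exists (Node l r); by rewrite /= hl hr cat_take_drop.
Qed.

Lemma good_lpsa a s : good a s -> exists t, lpsa a t = s.
Proof. exact: good_lpsa_aux. Qed.

Lemma card_sum n (P : pred 'I_n) : #|[pred i | P i]| = \sum_(i < n) (P i : nat).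
Proof.
rewrite -sum1_card big_mkcond; apply: eq_bigr => i _; rewrite inE; by case: (P i).
Qed.

Lemma sum_lt_min n m : \sum_(i < n) (i < m : nat) = minn m n.
Proof. elim: n => [|n IH]; first by rewrite big_ord0; lia. rewrite big_ord_recr /= IH; case: ltnP => /= h; lia. Qed.

Lemma sum_imp n (a b : pred 'I_n) : (forall i, a i -> b i) ->
  \sum_(i < n) (a i : nat) <= \sum_(i < n) (b i : nat).
Proof.
move=> h; apply: leq_sum => i _; case ai: (a i) => //=; by rewrite h.
Qed.

Lemma take_rcons_sum (s : seq nat) m : m < size s ->
  sumn (take m.+1 s) = sumn (take m s) + nth 0 s m.
Proof. move=> h; by rewrite (take_nth 0 h) -cats1 sumn_cat /= addn0. Qed.

Lemma P_mono (s : seq nat) k k' : k <= k' -> sumn (take k s) <= sumn (take k' s).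
Proof.
move=> h; rewrite -(minn_idPl h) take_min; exact: sumn_take_le.
Qed.

Definition Q {n} (v : 'I_n -> nat) m := \sum_(i < n) (v i <= m : nat).

Lemma Q_step n (v : 'I_n -> nat) m : Q v m.+1 = Q v m + qcount v m.+1.
Proof.
rewrite /Q /qcount card_sum -big_split; apply: eq_bigr => i _ /=.
case: (ltngtP (v i) m.+1) => h /=; lia.
Qed.

Lemma Q0 n (v : 'I_n -> nat) : in_Nb v -> Q v 0 = 0.
Proof.
move=> hv; rewrite /Q big1 // => i _; have := hv i; case: (v i) => //.
Qed.

Definition qseq {n} (v : 'I_n -> nat) := mkseq (fun i => qcount v i.+1) n.+1.

Lemma qseq_prefix n (v : 'I_n -> nat) m : in_Nb v -> m <= n.+1 ->
  sumn (take m (qseq v)) = Q v m.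
Proof.
move=> hv; elim: m => [|m IH] hm; first by rewrite take0 Q0.
rewrite take_rcons_sum; last by rewrite size_mkseq.
rewrite IH; last lia. by rewrite nth_mkseq // Q_step.
Qed.

Lemma qcount_last n (v : 'I_n -> nat) : in_Nb v -> qcount v n.+1 = 0.
Proof.
move=> hv; rewrite /qcount; apply: eq_card0 => i; rewrite !inE.
have := hv i; have := ltn_ord i; lia.
Qed.

Lemma tc_iff n (v : 'I_n -> nat) t : in_Nb v ->
  tree_condition v t <-> lpsa 0 t = qseq v.
Proof.
move=> hv; split.
  case=> hi [hj hl]; apply: (@eq_from_nth _ 0).
    by rewrite size_lpsa size_mkseq leaves_internal hi.
  move=> i; rewrite size_lpsa leaves_internal hi => hi'.
  rewrite nth_mkseq //.
  case: (ltngtP i n) => h.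
  - have := hj i.+1; rewrite lp_cexpr leaves_internal hi ifT; last lia.
    rewrite subn1 /=; apply; lia.
  - lia.
  - subst i; rewrite qcount_last //.
    have := hl; rewrite lp_cexpr leaves_internal hi ifT; last lia.
    by rewrite subn1.
move=> E.
have hi : internal t = n.
  have := f_equal size E; rewrite size_lpsa size_mkseq leaves_internal; lia.
split => //; split.
  move=> j hj; rewrite lp_cexpr leaves_internal hi ifT; last lia.
  rewrite E nth_mkseq; last lia. congr qcount; lia.
rewrite lp_cexpr leaves_internal hi ifT; last lia.
rewrite E nth_mkseq; last lia. by rewrite subn1 /= qcount_last.
Qed.

Lemma qseq_good n (v : 'I_n -> nat) : in_Nb v -> good 0 (qseq v).
Proof.
move=> hv.
have hQ : forall m, m <= n -> m <= Q v m.
  move=> m hm; rewrite /Q.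
  have := @sum_imp n (fun i => i < m) (fun i => v i <= m).
  rewrite sum_lt_min (minn_idPl hm); apply => i /= h; have := hv i; lia.
have hQn : Q v n.+1 = n.
  rewrite /Q (eq_bigr (fun i : 'I_n => (i < n : nat))) ?sum_lt_min ?minnn //.
  move=> i _; have := hv i; have := ltn_ord i; move=> h1 h2; rewrite h1; have -> : v i <= n.+1 by lia. by [].
split; rewrite ?size_mkseq //.
  by rewrite -(take_size (qseq v)) size_mkseq qseq_prefix // hQn addn0 addn1.
move=> m hm; rewrite qseq_prefix //; try lia. rewrite addn0; apply: hQ; lia.
Qed.

Section Surj.
Variables (n : nat) (t : btree).
Hypothesis ht : internal t = n.
Let s := lpsa 0 t.
Let P k := sumn (take k s).
Definition vsurj (i : 'I_n) : nat := \sum_(k < n.+1) (P k <= i : nat).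

Lemma s_size : size s = n.+1.
Proof. by rewrite /s size_lpsa leaves_internal ht. Qed.

Lemma s_sum : sumn s = n.
Proof. have [_ h _] := lpsa_good 0 t; rewrite -/s s_size in h; lia. Qed.

Lemma P_ge k : k <= n -> k <= P k.
Proof.
move=> hk; case: (posnP k) => [->//|k0].
have [_ _ h] := lpsa_good 0 t; have := h k; rewrite -/s s_size /P; lia.
Qed.

Lemma P_le k : P k <= n.
Proof. rewrite /P -s_sum; exact: sumn_take_le. Qed.

Lemma P_full : P n.+1 = n.
Proof. by rewrite /P -s_size take_size s_sum. Qed.

Lemma vsurj_le (i : 'I_n) m : m <= n.+1 -> (vsurj i <= m) = (i < P m).
Proof.
move=> hm; case: (ltnP i (P m)) => h.
  rewrite /vsurj.
  have := @sum_imp n.+1 (fun k => P k <= i) (fun k => k < m).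
  rewrite sum_lt_min => H; apply: leq_trans (H _) _; last lia.
  move=> k /= hk; case: (ltnP k m) => // hmk.
  have := P_mono s _ _ hmk; rewrite -/(P k) -/(P m); lia.
have hmn : m <= n.
  case: (ltnP m n.+1) => //; rewrite -ltnS => hh.
  have : m = n.+1 by lia. move=> e; move: h; rewrite e P_full; have := ltn_ord i; lia.
rewrite /vsurj.
have := @sum_imp n.+1 (fun k => k < m.+1) (fun k => P k <= i).
rewrite sum_lt_min => H.
apply/negbTE; rewrite -ltnNge; apply: leq_trans _ (H _); first lia.
move=> k /= hk; have := P_mono s _ _ (hk : k <= m); rewrite -/(P k) -/(P m); lia.
Qed.

Lemma vsurj_Nb : in_Nb vsurj.
Proof.
move=> i; apply/andP; split.
  have := @vsurj_le i 0 isT; rewrite /P take0 /= => e.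
  by rewrite ltnNge e.
have := @vsurj_le i i.+1; rewrite ltnS => ->; last by have := ltn_ord i; lia.
exact: P_ge (ltn_ord i).
Qed.

Lemma vsurj_Q m : m <= n.+1 -> Q vsurj m = P m.
Proof.
move=> hm; rewrite /Q (eq_bigr (fun i : 'I_n => (i < P m : nat))).
  by rewrite sum_lt_min; have := P_le m; lia.
by move=> i _; rewrite vsurj_le.
Qed.

Lemma vsurj_tc : tree_condition vsurj t.
Proof.
apply: (proj2 (@tc_iff _ _ t vsurj_Nb)); apply: (@eq_from_nth _ 0).
  by rewrite -/s s_size size_mkseq.
rewrite -/s s_size => m hm.
rewrite nth_mkseq //.
have := @Q_step _ vsurj m; rewrite !vsurj_Q; try lia.
rewrite /P take_rcons_sum ?s_size //; lia.
Qed.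
End Surj.

Theorem proposition1 (n : nat) (hn : 1 <= n) :
  (forall v : 'I_n -> nat, in_Nb v ->
     exists t : btree, tree_condition v t /\
       (forall t' : btree, tree_condition v t' -> t' = t)) /\
  (forall t : btree, internal t = n ->
     exists v : 'I_n -> nat, in_Nb v /\ tree_condition v t).
Proof.
split.
  move=> v hv; have [t ht] := good_lpsa _ _ (@qseq_good _ _ hv).
  exists t; split; first exact: (proj2 (@tc_iff _ _ t hv)).
  move=> t' /(proj1 (@tc_iff _ _ t' hv)) h.
  by apply: (@lpsa_inj 0); rewrite h ht.
move=> t ht; exists (vsurj n t); split.
  exact: (@vsurj_Nb n t ht).
exact: (@vsurj_tc n t ht).
Qed.
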